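(* Every RPBA-recognizable $\omega$-language is PPBA-recognizable.
   Context: A Parikh automaton of dimension $d$ is $\mathcal{A}=(Q,\Sigma,q_0,\Delta,F,C)$ with finite $Q$, $q_0\in Q$, $F\subseteq Q$, finite $\Delta\subseteq Q\times\Sigma\times\mathbb{N}^d\times Q$ and semi-linear $C\subseteq\mathbb{N}^d$ (a finite union of sets $\{b_0+\sum_{j=1}^\ell b_jz_j\mid z_j\in\mathbb{N}\}$, $b_j\in\mathbb{N}^d$). A run on an infinite word $\alpha$ is $r_1r_2\cdots$ with $r_i=(p_{i-1},\alpha_i,\mathbf{v}_i,p_i)\in\Delta$, $p_0=q_0$, and $\rho(r_1\cdots r_i)=\sum_{k\le i}\mathbf{v}_k$. For an RPBA (reachability Parikh–Büchi automaton) the run is accepting if there is $i\ge1$ with $p_i\in F$ and $\rho(r_1\cdots r_i)\in C$, and there are infinitely many $j$ with $p_j\in F$. For a PPBA (prefix Parikh–Büchi automaton) the run is accepting if there are infinitely many $i\ge1$ with $p_i\in F$ and $\rho(r_1\cdots r_i)\in C$. An $\omega$-language is X-recognizable if it equals the set of infinite words with an accepting run of some automaton of type X. *)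

(* Defs.v *)
From mathcomp Require Import all_boot.
Set Implicit Arguments. Unset Strict Implicit. Unset Printing Implicit Defensive.

Definition vec (d : nat) := {ffun 'I_d -> nat}.

(* Linear set {b0 + sum_j b_j z_j | z_j in N}, given by (b0, [b_1; ...; b_l]). *)
Definition linear_set (d : nat) := (vec d * seq (vec d))%type.

Definition in_linear (d : nat) (L : linear_set d) (v : vec d) : Prop :=
  exists z : nat -> nat,
    forall j : 'I_d,
      v j = L.1 j + \sum_(l < size L.2) z l * (nth [ffun => 0] L.2 l) j.

Definition semilinear (d : nat) := seq (linear_set d).

Definition in_semilinear (d : nat) (C : semilinear d) (v : vec d) : Prop :=
  exists2 k, k < size C & in_linear (nth ([ffun => 0], [::]) C k) v.

Record PA (Sigma : finType) : Type := MkPA {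
  pa_Q : finType;
  pa_d : nat;
  pa_q0 : pa_Q;
  pa_Delta : seq (pa_Q * Sigma * vec pa_d * pa_Q);
  pa_F : pred pa_Q;
  pa_C : semilinear pa_d
}.

(* A run r_1 r_2 ... on alpha (alpha_i = alpha (i-1)) is described by its
   state sequence p (p 0 = q0, p i = p_i) and its vector sequence v
   (v (i-1) = v_i), with r_i = (p (i-1), alpha (i-1), v (i-1), p i) in Delta. *)
Definition is_run (Sigma : finType) (A : PA Sigma) (alpha : nat -> Sigma)
    (p : nat -> pa_Q A) (v : nat -> vec (pa_d A)) : Prop :=
  p 0 = @pa_q0 _ A /\
  forall i, (p i, alpha i, v i, p i.+1) \in @pa_Delta _ A.

Definition rho (d : nat) (v : nat -> vec d) (i : nat) : vec d :=
  [ffun j => \sum_(k < i) v k j].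

Definition RPBA_accepts (Sigma : finType) (A : PA Sigma) (alpha : nat -> Sigma) : Prop :=
  exists p v, @is_run _ A alpha p v /\
    (exists i, 1 <= i /\ p i \in @pa_F _ A /\ in_semilinear (@pa_C _ A) (rho v i)) /\
    (forall n, exists j, n <= j /\ p j \in @pa_F _ A).

Definition PPBA_accepts (Sigma : finType) (A : PA Sigma) (alpha : nat -> Sigma) : Prop :=
  exists p v, @is_run _ A alpha p v /\
    (forall n, exists i, n <= i /\ 1 <= i /\ p i \in @pa_F _ A /\
                         in_semilinear (@pa_C _ A) (rho v i)).

Definition RPBA_recognizable (Sigma : finType) (L : (nat -> Sigma) -> Prop) : Prop :=
  exists A : PA Sigma, forall alpha, L alpha <-> RPBA_accepts A alpha.

Definition PPBA_recognizable (Sigma : finType) (L : (nat -> Sigma) -> Prop) : Prop :=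
  exists A : PA Sigma, forall alpha, L alpha <-> PPBA_accepts A alpha.

(* Main.v *)
Require Import Defs.
From mathcomp Require Import all_boot.
Set Implicit Arguments. Unset Strict Implicit. Unset Printing Implicit Defensive.

Section Constr.
Variable Sigma : finType.
Variable A : PA Sigma.

Local Notation Q := (@pa_Q _ A).
Local Notation d := (@pa_d _ A).

Definition f0 (t : Q * Sigma * vec d * Q) : (Q * bool) * Sigma * vec d * (Q * bool) :=
  let: (p, a, v, q) := t in ((p, false), a, v, (q, false)).
Definition f1 (t : Q * Sigma * vec d * Q) : (Q * bool) * Sigma * vec d * (Q * bool) :=
  let: (p, a, v, q) := t in ((p, false), a, v, (q, true)).
Definition f2 (t : Q * Sigma * vec d * Q) : (Q * bool) * Sigma * vec d * (Q * bool) :=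
  let: (p, a, v, q) := t in ((p, true), a, [ffun => 0], (q, true)).

Definition DeltaB := [seq f0 t | t <- (@pa_Delta _ A)] ++
  [seq f1 t | t <- [seq t <- (@pa_Delta _ A) | (@pa_F _ A) t.2]] ++ [seq f2 t | t <- (@pa_Delta _ A)].

Definition BA : PA Sigma := @MkPA Sigma (Q * bool)%type d (@pa_q0 _ A, false) DeltaB
  (fun s => s.2 && (@pa_F _ A) s.1) (@pa_C _ A).

Definition pick_vec (p : Q) (a : Sigma) (q : Q) : vec d :=
  match [seq t <- (@pa_Delta _ A) | (t.1.1.1 == p) && (t.1.1.2 == a) && (t.2 == q)] with
  | t :: _ => t.1.2 | [::] => [ffun => 0] end.

Lemma pick_vecP p a q v : (p, a, v, q) \in (@pa_Delta _ A) -> (p, a, pick_vec p a q, q) \in (@pa_Delta _ A).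
Proof.
move=> H; rewrite /pick_vec.
have : (p, a, v, q) \in [seq t <- (@pa_Delta _ A) | (t.1.1.1 == p) && (t.1.1.2 == a) && (t.2 == q)].
  by rewrite mem_filter H !eqxx.
case E: [seq t <- _ | _] => [|t s] //= _.
have : t \in [seq t <- (@pa_Delta _ A) | (t.1.1.1 == p) && (t.1.1.2 == a) && (t.2 == q)].
  by rewrite E mem_head.
rewrite mem_filter; case: t {E} => [[[p' a'] v'] q'] /= /andP [/andP [/andP [/eqP -> /eqP ->] /eqP ->]] //.
Qed.

Lemma memB s a v s' : (s, a, v, s') \in DeltaB ->
  [/\ s.2 -> s'.2, (s.2 -> v = [ffun => 0]),
      (~~ s.2 -> (s.1, a, v, s'.1) \in (@pa_Delta _ A)),
      (s.2 -> exists w, (s.1, a, w, s'.1) \in (@pa_Delta _ A)) &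
      (~~ s.2 -> s'.2 -> (@pa_F _ A) s'.1)].
Proof.
rewrite /DeltaB !mem_cat => /orP [|/orP []] /mapP [[[[p b] w] q]] //=.
- move=> H [-> -> -> ->] /=; split => //.
- rewrite mem_filter /= => /andP [Hf H] [-> -> -> ->] /=; split => //.
- move=> H [-> -> -> ->] /=; split => //; by exists w.
Qed.

Lemma rho_eq (v w : nat -> vec d) i : (forall k, k < i -> v k = w k) -> rho v i = rho w i.
Proof.
move=> H; apply/ffunP => j; rewrite !ffunE; apply: eq_bigr => k _; by rewrite H.
Qed.

Lemma rho_const (v : nat -> vec d) i : (forall k, i <= k -> v k = [ffun => 0]) ->
  forall j, i <= j -> rho v j = rho v i.
Proof.
move=> H; elim => [|j IH]; first by rewrite leqn0 => /eqP ->.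
rewrite leq_eqVlt => /orP [/eqP -> //|Hij].
rewrite -IH //; apply/ffunP => x; rewrite !ffunE big_ord_recr /= H ?ffunE ?addn0 //.
Qed.

Lemma RP alpha : RPBA_accepts A alpha -> PPBA_accepts BA alpha.
Proof.
move=> [p [v [[Hp0 Hrun] [[i0 [Hi0 [HF HC]]] Hinf]]]].
exists (fun j => (p j, i0 <= j)), (fun j => if j < i0 then v j else [ffun => 0]).
have Hrho : forall j, i0 <= j -> rho (fun j => if j < i0 then v j else [ffun => 0]) j = rho v i0.
  move=> j Hj; rewrite (rho_const _ (i := i0)) //; last by move=> k Hk; rewrite ltnNge Hk.
  by apply: rho_eq => k ->.
split; first split.
- by rewrite /= Hp0; case: i0 Hi0 {HF HC Hrho}.
- move=> j; rewrite /= /DeltaB !mem_cat.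
  case: (ltngtP j.+1 i0) => Hj.
  + have E1 : (i0 <= j) = false by apply/negbTE; rewrite -ltnNge; apply: ltn_trans Hj.
    have E2 : (i0 <= j.+1) = false by apply/negbTE; rewrite -ltnNge.
    have E3 : (j < i0) = true by apply: ltn_trans Hj.
    rewrite ?E1 ?E2 ?E3 /=; apply/orP; left; apply/mapP.
    by exists (p j, alpha j, v j, p j.+1).
  + have E1 : (i0 <= j) = true by [].
    have E2 : (i0 <= j.+1) = true by apply: ltnW.
    have E3 : (j < i0) = false by apply/negbTE; rewrite -leqNgt.
    rewrite ?E1 ?E2 ?E3 /=; apply/orP; right; apply/orP; right; apply/mapP.
    by exists (p j, alpha j, v j, p j.+1).
  + subst i0; rewrite ?leqnn ?ltnn ?ltnSn /=; apply/orP; right; apply/orP; left; apply/mapP.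
    exists (p j, alpha j, v j, p j.+1) => //; by rewrite mem_filter /= Hrun andbT.
- move=> n; have [j [Hj HFj]] := Hinf (maxn n i0).
  exists j; rewrite geq_max in Hj; case/andP: Hj => Hn Hi.
  split => //; split; first exact: leq_trans Hi.
  by split; [rewrite /= Hi | rewrite Hrho].
Qed.

Lemma PR alpha : PPBA_accepts BA alpha -> RPBA_accepts A alpha.
Proof.
move=> [pB [vB [[Hp0 Hrun] Hacc]]].
have Hex : exists j, (pB j).2.
  by have [i [_ [_ [/andP [H _] _]]]] := Hacc 0; exists i.
have Hmono : forall j k, j <= k -> (pB j).2 -> (pB k).2.
  move=> j k /subnK <-; elim: (k - j) => [//|m IH] /IH H.
  by have [Hm _ _ _ _] := memB (Hrun (m + j)); rewrite addSn; apply: Hm.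
case: (ex_minnP Hex) => s Hs Hmin.
have Hs0 : 0 < s by case: s Hs Hmin => //; rewrite Hp0.
have HvB : forall k, s <= k -> vB k = [ffun => 0].
  by move=> k Hk; have [_ -> //] := memB (Hrun k); apply: Hmono Hk Hs.
pose v := fun j => if (pB j).2 then pick_vec (pB j).1 (alpha j) (pB j.+1).1 else vB j.
exists (fun j => (pB j).1), v; split; first split.
- by rewrite Hp0.
- move=> j; have [_ _ H1 H2 _] := memB (Hrun j); rewrite /v.
  case E: (pB j).2; last by apply: H1; rewrite E.
  by have [w Hw] := H2 E; apply: pick_vecP Hw.
split.
- exists s; split => //.
  have Hprev : ~~ (pB s.-1).2.
    by apply/negP => H; have := Hmin _ H; rewrite leqNgt; case: (s) Hs0 => // s0 _; rewrite /= ltnSn.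
  have [_ _ _ _ H] := memB (Hrun s.-1); rewrite prednK // in H.
  split; first exact: H.
  have [i [Hi [_ [/andP [Hfi _] HC]]]] := Hacc 0.
  have Hsi : s <= i by apply: Hmin.
  rewrite (rho_eq (w := vB)); last first.
    move=> k Hk; rewrite /v; case E: (pB k).2 => //.
    by have := Hmin _ E; rewrite leqNgt Hk.
  by rewrite -(rho_const HvB Hsi).
- move=> n; have [i [Hi [_ [/andP [_ H] _]]]] := Hacc n; by exists i.
Qed.

End Constr.

Theorem corollary1 (Sigma : finType) (L : (nat -> Sigma) -> Prop) :
  RPBA_recognizable L -> PPBA_recognizable L.
Proof.
move=> [A HA]; exists (BA A) => alpha; split => [/HA|H]; [exact: RP | apply/HA; exact: PR].
Qed.
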